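(* For $r\in\mathbb{Z}$ and $\alpha=(\alpha_n)_{n\in\mathbb{Z}}\in(k^\times)^{\mathbb{Z}}$ put $r\cdot\alpha=(\alpha_{n-r})_{n\in\mathbb{Z}}$, and let $(k^\times)^{\mathbb{Z}}\rtimes\mathbb{Z}$ be the set of pairs $(\alpha,r)$ with multiplication $(\alpha,r)(\beta,t)=(\alpha\,(r\cdot\beta),\,r+t)$ (product in $(k^\times)^{\mathbb{Z}}$ componentwise). Let $\theta_r:H\to H$ be the linear map $\theta_r(x^ny^m)=x^{n+r}y^m$, and let $\phi_\alpha:H\to H$ be the linear map with $\phi_\alpha(x^n)=x^n$ and $\phi_\alpha(x^ny^m)=\big(\prod_{i=0}^{m-1}\alpha_{n+i}\big)x^ny^m$ for $m\geq1$. Then $$\Psi:(k^\times)^{\mathbb{Z}}\rtimes\mathbb{Z}\to\mathrm{Aut}_c^{gr}(H),\qquad \Psi(\alpha,r)=\phi_\alpha\theta_r,$$ is a group isomorphism.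
   Context: Let $k$ be a field and $0\neq q\in k$ not a root of unity. Let $H=k_q[x,x^{-1},y]$ be the $k$-algebra generated by $x,x^{-1},y$ subject to $xx^{-1}=x^{-1}x=1$, $yx=qxy$, a Hopf algebra with $\Delta(x)=x\otimes x$, $\Delta(x^{-1})=x^{-1}\otimes x^{-1}$, $\Delta(y)=y\otimes x+1\otimes y$, $\varepsilon(x)=1$, $\varepsilon(y)=0$. The elements $x^ny^m$ ($n\in\mathbb{Z}$, $m\in\mathbb{N}$) form a $k$-basis, and $\Delta(x^ny^m)=\sum_{i=0}^m\binom{m}{i}_q x^ny^i\otimes x^{n+i}y^{m-i}$ with $\binom{m}{i}_q$ the $q$-binomial coefficients $\frac{(m)!_q}{(i)!_q(m-i)!_q}$, $(n)_q=1+q+\dots+q^{n-1}$, $(n)!_q=(n)_q\cdots(1)_q$. Let $H_0=\mathrm{span}\{x^n\}$, $H(m)=H_0y^m$, so $H=\bigoplus_{m\ge0}H(m)$ is a graded coalgebra. $\mathrm{Aut}_c^{gr}(H)$ is the group (under composition) of coalgebra automorphisms $\phi$ of $H$ with $\phi(H(m))\subseteq H(m)$ for all $m\geq0$. *)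

(* Defs.v *)
From HB Require Import structures.
From mathcomp Require Import all_boot all_order all_algebra.
From mathcomp Require Import finmap.
From mathcomp Require monalg.
Import monalg.
Set Implicit Arguments. Unset Strict Implicit. Unset Printing Implicit Defensive.
Import Order.TTheory GRing.Theory Num.Theory.
Local Open Scope ring_scope.

Section Defs.
Variable k : fieldType.

(* H as a k-vector space: basis elements x^n y^m indexed by (n, m) in Z x N *)
Definition Hsp := {malg k[(int * nat)%type]}.
(* H ⊗ H: basis (x^n y^m) ⊗ (x^n' y^m') indexed by pairs of indices *)
Definition HHsp := {malg k[((int * nat) * (int * nat))%type]}.

Definition bas (p : int * nat) : Hsp := << p >>.

Definition lext (K : choiceType) (V : lmodType k) (f : K -> V)
  (v : {malg k[K]}) : V := \sum_(p <- msupp v) v@_p *: f p.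

Definition qint (q : k) (n : nat) : k := \sum_(i < n) q ^+ i.
Definition qfact (q : k) (n : nat) : k := \prod_(i < n) qint q i.+1.
Definition qbinom (q : k) (m i : nat) : k :=
  qfact q m / (qfact q i * qfact q (m - i)).

Definition Delta (q : k) : Hsp -> HHsp :=
  lext (fun p : int * nat =>
    \sum_(i < p.2.+1)
      qbinom q p.2 i *: << ((p.1, (i : nat)), (p.1 + (i : nat)%:Z, (p.2 - i)%N)) >>).

Definition eps (v : Hsp) : k := \sum_(p <- msupp v | p.2 == 0%N) v@_p.

Definition tens (a b : Hsp) : HHsp :=
  \sum_(p <- msupp a) \sum_(p' <- msupp b) (a@_p * b@_p') *: << (p, p') >>.

Definition tmap (f g : Hsp -> Hsp) : HHsp -> HHsp :=
  lext (fun pp : (int * nat) * (int * nat) => tens (f (bas pp.1)) (g (bas pp.2))).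

Definition inHm (m : nat) (v : Hsp) : Prop :=
  forall p, p \in msupp v -> p.2 = m.

Definition is_autcgr (q : k) (phi : Hsp -> Hsp) : Prop :=
  [/\ (forall (a : k) (u v : Hsp), phi (a *: u + v) = a *: phi u + phi v),
      bijective phi,
      (forall v, Delta q (phi v) = tmap phi phi (Delta q v)),
      (forall v, eps (phi v) = eps v)
    & (forall m v, inHm m v -> inHm m (phi v))].

Definition theta (r : int) : Hsp -> Hsp :=
  lext (fun p : int * nat => bas (p.1 + r, p.2)).

Definition phialpha (al : int -> k) : Hsp -> Hsp :=
  lext (fun p : int * nat => (\prod_(i < p.2) al (p.1 + (i : nat)%:Z)) *: bas p).

Definition Psi (al : int -> k) (r : int) : Hsp -> Hsp := phialpha al \o theta r.

Definition sd_mul (al : int -> k) (r : int) (be : int -> k) (t : int)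
  : (int -> k) * int := (fun n => al n * be (n - r), r + t).

End Defs.

(* Main.v *)
Set Warnings "-notation-overridden,-ambiguous-paths,-notation-incompatible-prefix".
Require Import Defs.
From HB Require Import structures.
From mathcomp Require Import all_boot all_order all_algebra.
From mathcomp Require Import finmap ring.
From mathcomp Require monalg.
Import monalg.
Set Implicit Arguments. Unset Strict Implicit. Unset Printing Implicit Defensive.
Import Order.TTheory GRing.Theory Num.Theory.
Local Open Scope ring_scope.


Section Gen.
Variable k : fieldType.

Definition islin (U V : lmodType k) (f : U -> V) :=
  forall (a : k) (u v : U), f (a *: u + v) = a *: f u + f v.

Lemma islin0 (U V : lmodType k) (f : U -> V) : islin f -> f 0 = 0.
Proof.
move=> hf; have e := hf 1 0 0; rewrite !scale1r addr0 in e.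
by apply: (@addrI _ (f 0)); rewrite addr0 -e.
Qed.

Lemma islinD (U V : lmodType k) (f : U -> V) : islin f -> forall u v, f (u + v) = f u + f v.
Proof. by move=> hf u v; have := hf 1 u v; rewrite !scale1r. Qed.

Lemma islinZ (U V : lmodType k) (f : U -> V) : islin f -> forall a u, f (a *: u) = a *: f u.
Proof. by move=> hf a u; rewrite -[a *: u]addr0 hf (islin0 hf) addr0. Qed.

Lemma islin_sum (U V : lmodType k) (f : U -> V) (I : Type) (r : seq I) (P : pred I) F :
  islin f -> f (\sum_(i <- r | P i) F i) = \sum_(i <- r | P i) f (F i).
Proof. by move=> hf; apply: (big_morph f (islinD hf) (islin0 hf)). Qed.

Lemma islin_comp (U V W : lmodType k) (f : V -> W) (g : U -> V) :
  islin f -> islin g -> islin (f \o g).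
Proof. by move=> hf hg a u v /=; rewrite hg hf. Qed.

Lemma malgUZ (T : choiceType) (c : k) (p : T) : << c *g p >> = c *: << p >> :> {malg k[T]}.
Proof. by apply/malgP => x; rewrite mcoeffZ !mcoeffU mulr_natr. Qed.

Lemma lextEw (T : choiceType) (V : lmodType k) (f : T -> V) (v : {malg k[T]}) (d : {fset T}) :
  (msupp v `<=` d)%fset -> lext f v = \sum_(p <- d) v@_p *: f p.
Proof.
move=> le; rewrite /lext (big_fset_incl _ le) // => x _ /mcoeff_outdom ->.
by rewrite scale0r.
Qed.

Lemma lext_lin (T : choiceType) (V : lmodType k) (f : T -> V) : islin (lext f).
Proof.
move=> a u v; set d := (msupp u `|` msupp v)%fset.
have hu : (msupp u `<=` d)%fset by apply: fsubsetUl.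
have hv : (msupp v `<=` d)%fset by apply: fsubsetUr.
have huv : (msupp (a *: u + v) `<=` d)%fset.
  apply: fsubset_trans (msuppD_le _ _) _; apply/fsubUsetP; split => //.
  exact: fsubset_trans (msuppZ_le _ _) hu.
rewrite (lextEw _ huv) (lextEw _ hu) (lextEw _ hv) scaler_sumr -big_split /=.
by apply: eq_bigr => p _; rewrite mcoeffD mcoeffZ scalerDl scalerA.
Qed.

Lemma lextU (T : choiceType) (V : lmodType k) (f : T -> V) (c : k) p :
  lext f << c *g p >> = c *: f p.
Proof.
rewrite (lextEw _ (@msuppU_le _ _ p c)) big_seq_fset1 mcoeffUU //.
Qed.

Lemma lext1 (T : choiceType) (V : lmodType k) (f : T -> V) p : lext f << p >> = f p.
Proof. by rewrite lextU scale1r. Qed.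

Lemma basis_ext (T : choiceType) (V : lmodType k) (F G : {malg k[T]} -> V) :
  islin F -> islin G -> (forall p, F << p >> = G << p >>) -> forall v, F v = G v.
Proof.
move=> hF hG hb v; rewrite (monalgE v) (islin_sum _ _ _ hF) (islin_sum _ _ _ hG).
by apply: eq_bigr => p _; rewrite malgUZ (islinZ hF) (islinZ hG) hb.
Qed.

Lemma sum_supp_delta (T : choiceType) (w : {malg k[T]}) x (G : T -> k) :
  \sum_(p <- msupp w) w@_p * ((p == x)%:R * G p) = w@_x * G x.
Proof.
have [xw|xnw] := boolP (x \in msupp w).
  rewrite (big_fsetD1 x) //= eqxx mul1r big1_fset ?addr0 // => p.
  by rewrite in_fsetD1 => /andP[/negbTE -> _] _; rewrite mul0r mulr0.
rewrite big1_fset; last first.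
  by move=> p pw _; case: eqP => [e|_]; [by move: xnw; rewrite -e pw| rewrite mul0r mulr0].
by rewrite mcoeff_outdom // mul0r.
Qed.


Notation K := (int * nat)%type.

Lemma mcoeffU1' (T : choiceType) (p x : T) : (<< p >> : {malg k[T]})@_x = (p == x)%:R.
Proof. by rewrite mcoeffU. Qed.

Lemma mcoeff_sum (T : choiceType) (I : Type) (r : seq I) (P : pred I) (F : I -> {malg k[T]}) x :
  (\sum_(i <- r | P i) F i)@_x = \sum_(i <- r | P i) (F i)@_x.
Proof. exact: raddf_sum. Qed.

Lemma tensC (u v : Hsp k) (x y : K) : (tens u v)@_(x, y) = u@_x * v@_y.
Proof.
rewrite /tens mcoeff_sum.
transitivity (\sum_(p <- msupp u) u@_p * ((p == x)%:R *
    (\sum_(p' <- msupp v) v@_p' * ((p' == y)%:R * 1)))).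
  apply: eq_bigr => p _; rewrite mcoeff_sum mulr_sumr mulr_sumr.
  apply: eq_bigr => p' _. rewrite mcoeffZ mcoeffU1' xpair_eqE.
  case: (p == x); case: (p' == y); by rewrite /= ?mulr0 ?mul0r ?mulr1 ?mul1r ?mulr0.
by rewrite (sum_supp_delta v y (fun _ => 1)) (sum_supp_delta u x (fun _ => v@_y * 1)) mulr1.
Qed.

Lemma key_eq (p : K) (i i0 j0 : nat) (a b : int) : (i <= p.2)%N ->
  (((p.1, i), (p.1 + i%:Z, (p.2 - i)%N)) == ((a, i0), (b, j0))) =
  [&& p == (a, (i0 + j0)%N), i == i0 & b == a + i0%:Z].
Proof.
case: p => p1 p2 /= hi; rewrite !xpair_eqE.
apply/idP/idP.
  case/andP=> /andP[/eqP ea /eqP ei] /andP[/eqP eb /eqP e]; subst.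
  by rewrite subnKC // !eqxx.
by case/and3P=> /andP[/eqP ea /eqP e2] /eqP ei /eqP eb; subst; rewrite addKn !eqxx.
Qed.

Lemma DeltaC (q : k) (w : Hsp k) (a b : int) (i0 j0 : nat) :
  (Delta q w)@_((a, i0), (b, j0)) =
  w@_(a, (i0 + j0)%N) * (qbinom q (i0 + j0) i0 * (b == a + i0%:Z)%:R).
Proof.
rewrite /Delta /lext mcoeff_sum.
transitivity (\sum_(p <- msupp w) w@_p * ((p == (a, (i0 + j0)%N))%:R *
   (qbinom q p.2 i0 * (b == a + i0%:Z)%:R))); last by rewrite sum_supp_delta.
apply: eq_bigr => p _; rewrite mcoeffZ; congr (_ * _).
rewrite mcoeff_sum.
under eq_bigr => i _ do rewrite mcoeffZ mcoeffU1' (key_eq _ _ _ _ (ltn_ord i)).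
case: (eqVneq p (a, (i0 + j0)%N)) => [->|ne] /=; last first.
  by rewrite mul0r big1 // => i _; rewrite mulr0.
have lt : (i0 < (i0 + j0).+1)%N by rewrite ltnS leq_addr.
rewrite (bigD1 (Ordinal lt)) //= eqxx /= big1 ?addr0 ?mul1r; last first.
  by move=> i; rewrite -val_eqE /= => /negbTE ->; rewrite /= mulr0.
by [].
Qed.


Lemma lin_expand (T : choiceType) (V : lmodType k) (F : {malg k[T]} -> V) v :
  islin F -> F v = \sum_(p <- msupp v) v@_p *: F << p >>.
Proof.
move=> hF; rewrite {1}(monalgE v) (islin_sum _ _ _ hF).
by apply: eq_bigr => p _; rewrite malgUZ (islinZ hF).
Qed.

Lemma Delta_bas (q : k) (n : int) (m : nat) :
  Delta q (bas k (n, m)) =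
  \sum_(i < m.+1) qbinom q m i *: << ((n, (i : nat)), (n + (i : nat)%:Z, (m - i)%N)) >>.
Proof. by rewrite /Delta /bas lext1. Qed.

Lemma tmap_Dbas (f g : Hsp k -> Hsp k) (q : k) (n : int) (m : nat) :
  tmap f g (Delta q (bas k (n, m))) =
  \sum_(i < m.+1) qbinom q m i *: tens (f (bas k (n, (i : nat)))) (g (bas k (n + (i : nat)%:Z, (m - i)%N))).
Proof.
rewrite Delta_bas /tmap (islin_sum _ _ _ (lext_lin _)).
by apply: eq_bigr => i _; rewrite (islinZ (lext_lin _)) lext1.
Qed.

Lemma tens_bas (a b : k) (p p' : K) :
  tens (a *: bas k p) (b *: bas k p') = (a * b) *: << (p, p') >>.
Proof.
apply/malgP => -[x y]; rewrite tensC !mcoeffZ !mcoeffU1' xpair_eqE.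
by case: (p == x); case: (p' == y); rewrite /= ?mulr0 ?mul0r ?mulr1 ?mul1r ?mulr0.
Qed.

Lemma Psi_lin (al : int -> k) (r : int) : islin (Psi al r).
Proof. exact: islin_comp (lext_lin _) (lext_lin _). Qed.

Lemma PsiB (al : int -> k) (r n : int) (m : nat) :
  Psi al r (bas k (n, m)) = (\prod_(i < m) al (n + r + (i : nat)%:Z)) *: bas k (n + r, m).
Proof. by rewrite /Psi /= /theta /bas lext1 /phialpha lext1. Qed.

Lemma prod_split (al : int -> k) (s : int) (m i : nat) : (i <= m)%N ->
  \prod_(j < m) al (s + (j : nat)%:Z) =
  \prod_(j < i) al (s + (j : nat)%:Z) * \prod_(j < m - i) al (s + i%:Z + (j : nat)%:Z).
Proof.
move=> le; move: (m - i)%N (subnKC le) => d e; subst m.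
rewrite big_split_ord /=; congr (_ * _).
by apply: eq_bigr => j _; rewrite PoszD addrA.
Qed.


Lemma Psi_hom (al be : int -> k) (r t : int) v :
  Psi (sd_mul al r be t).1 (sd_mul al r be t).2 v = Psi al r (Psi be t v).
Proof.
apply: (basis_ext (Psi_lin _ _) (islin_comp (Psi_lin al r) (Psi_lin be t))) => -[n m] /=.
rewrite -/(bas k (n, m)) !PsiB (islinZ (Psi_lin _ _)) PsiB scalerA /= big_split /=.
have e1 : n + (r + t) = n + t + r by ring.
rewrite e1 mulrC; congr (_ * _ *: _); apply: eq_bigr => i _; congr (be _); ring.
Qed.

Lemma Psi_one (c : int -> k) v : (forall n, c n = 1) -> Psi c 0 v = v.
Proof.
move=> hc; apply: (basis_ext (Psi_lin _ _) (F := Psi c 0) (G := id)) => //.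
move=> [n m]; rewrite -/(bas k (n, m)) PsiB addr0 big1 ?scale1r // => i _; exact: hc.
Qed.

Lemma Psi_inj (al be : int -> k) (r t : int) :
  (forall n, al n != 0) -> (forall v, Psi al r v = Psi be t v) ->
  (forall n, al n = be n) /\ r = t.
Proof.
move=> hal h.
have key : forall n, al (n + r) = be (n + t) * ((n + t, 1%N) == (n + r, 1%N))%:R.
  move=> n; have := congr1 (mcoeff (n + r, 1%N)) (h (bas k (n, 1%N))).
  by rewrite !PsiB !big_ord1 /= !addr0 !mcoeffZ !mcoeffU1' eqxx mulr1.
have rt : r = t.
  have := key 0; case: eqP => [[]|_]; first by rewrite !add0r.
  by rewrite mulr0 => /eqP; rewrite (negbTE (hal _)).
split => // n; have := key (n - r); rewrite -rt eqxx mulr1 subrK //.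
Qed.


Lemma Psi_bij (al : int -> k) (r : int) : (forall n, al n != 0) -> bijective (Psi al r).
Proof.
move=> hal; pose al' := fun n => (al (n + r))^-1.
exists (Psi al' (- r)) => v.
  rewrite -Psi_hom /sd_mul /= addNr Psi_one // => n.
  by rewrite /al' opprK mulVf.
rewrite -Psi_hom /sd_mul /= subrr Psi_one // => n.
by rewrite /al' subrK mulfV.
Qed.

Lemma Psi_coalg (q : k) (al : int -> k) (r : int) v :
  Delta q (Psi al r v) = tmap (Psi al r) (Psi al r) (Delta q v).
Proof.
apply: (basis_ext (islin_comp (lext_lin _) (Psi_lin al r))
         (islin_comp (lext_lin _) (lext_lin _))) => -[n m].
change (Delta q (Psi al r (bas k (n,m))) = tmap (Psi al r) (Psi al r) (Delta q (bas k (n,m)))).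
rewrite tmap_Dbas PsiB (islinZ (lext_lin _) : forall a w, Delta q (a *: w) = a *: Delta q w).
rewrite Delta_bas scaler_sumr; apply: eq_bigr => i _.
rewrite !PsiB tens_bas scalerA scalerA [_ * qbinom _ _ _]mulrC.
rewrite (prod_split _ _ (ltn_ord i : (i <= m)%N)).
have e : n + (i : nat)%:Z + r = n + r + (i : nat)%:Z by ring.
by rewrite e.
Qed.

Lemma epsEw (v : Hsp k) (d : {fset K}) : (msupp v `<=` d)%fset ->
  eps v = \sum_(p <- d) (p.2 == 0%N)%:R * v@_p.
Proof.
move=> le; rewrite /eps big_mkcond (big_fset_incl _ le) /=.
  by apply: eq_bigr => p _; case: ifP; rewrite ?mul1r ?mul0r.
by move=> x _ /mcoeff_outdom ->; case: ifP.
Qed.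

Lemma eps_lin (a : k) (u v : Hsp k) : eps (a *: u + v) = a * eps u + eps v.
Proof.
set d := (msupp u `|` msupp v)%fset.
have hu : (msupp u `<=` d)%fset by apply: fsubsetUl.
have hv : (msupp v `<=` d)%fset by apply: fsubsetUr.
have huv : (msupp (a *: u + v) `<=` d)%fset.
  apply: fsubset_trans (msuppD_le _ _) _; apply/fsubUsetP; split => //.
  exact: fsubset_trans (msuppZ_le _ _) hu.
rewrite (epsEw huv) (epsEw hu) (epsEw hv) mulr_sumr -big_split /=.
by apply: eq_bigr => p _; rewrite mcoeffD mcoeffZ; ring.
Qed.

Lemma eps0 : eps (0 : Hsp k) = 0.
Proof. by rewrite /eps msupp0 big_nil. Qed.

Lemma epsZ (a : k) (u : Hsp k) : eps (a *: u) = a * eps u.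
Proof. by rewrite -[a *: u]addr0 eps_lin eps0 addr0. Qed.

Lemma eps_sum (I : Type) (r : seq I) (F : I -> Hsp k) :
  eps (\sum_(i <- r) F i) = \sum_(i <- r) eps (F i).
Proof.
have epsD : forall u v : Hsp k, eps (u + v) = eps u + eps v.
  by move=> u v; have := eps_lin 1 u v; rewrite scale1r mul1r.
exact: (big_morph (@eps k) epsD eps0).
Qed.

Lemma eps_basZ (c : k) (p : K) : eps (c *: bas k p) = c * (p.2 == 0%N)%:R.
Proof.
rewrite (epsEw (d := [fset p]%fset)); last first.
  exact: fsubset_trans (msuppZ_le _ _) msuppU_le.
by rewrite big_seq_fset1 mcoeffZ mcoeffU1' eqxx mulr1 mulrC.
Qed.

Lemma Psi_eps (al : int -> k) (r : int) v : eps (Psi al r v) = eps v.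
Proof.
rewrite (lin_expand v (Psi_lin al r)) [in RHS](monalgE v) !eps_sum.
apply: eq_bigr => -[n m] _; rewrite malgUZ !epsZ; congr (_ * _).
change (eps (Psi al r (bas k (n,m))) = eps (bas k (n,m))).
rewrite PsiB eps_basZ -[bas k (n, m)]scale1r eps_basZ; case: m => [|m] /=.
  by rewrite big_ord0.
by rewrite !mulr0.
Qed.

Lemma inHm0 m : inHm m (0 : Hsp k).
Proof. by move=> p; rewrite msupp0 in_fset0. Qed.

Lemma inHmD m (u v : Hsp k) : inHm m u -> inHm m v -> inHm m (u + v).
Proof.
move=> hu hv p /(fsubsetP (msuppD_le _ _)); rewrite in_fsetU => /orP[]; [exact: hu|exact: hv].
Qed.

Lemma inHmZ m (a : k) (u : Hsp k) : inHm m u -> inHm m (a *: u).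
Proof. by move=> hu p /(fsubsetP (msuppZ_le _ _)); apply: hu. Qed.

Lemma inHm_sum m (I : Type) (r : seq I) (P : pred I) (F : I -> Hsp k) :
  (forall i, P i -> inHm m (F i)) -> inHm m (\sum_(i <- r | P i) F i).
Proof. by move=> h; apply: (big_ind (inHm m)) => //; [exact: inHm0| exact: inHmD]. Qed.

Lemma inHm_bas (n : int) m : inHm m (bas k (n, m)).
Proof. by move=> p /(fsubsetP msuppU_le); rewrite in_fset1 => /eqP ->. Qed.

Lemma Psi_inHm (al : int -> k) (r : int) m v : inHm m v -> inHm m (Psi al r v).
Proof.
move=> hv; rewrite (lin_expand v (Psi_lin al r)) big_seq.
apply: inHm_sum => -[n m'] /hv /= e; subst m'.
apply: inHmZ; change (inHm m (Psi al r (bas k (n, m)))).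
by rewrite PsiB; apply: inHmZ; apply: inHm_bas.
Qed.

Lemma part1 (q : k) (al : int -> k) (r : int) : (forall n, al n != 0) ->
  is_autcgr q (Psi al r).
Proof.
move=> hal; split.
- exact: Psi_lin.
- exact: Psi_bij.
- exact: Psi_coalg.
- exact: Psi_eps.
- exact: Psi_inHm.
Qed.


Lemma qbinom_neq0 (q : k) : (forall n : nat, (0 < n)%N -> q ^+ n != 1) ->
  forall m i, qbinom q m i != 0.
Proof.
move=> hq.
have qi : forall j, qint q j.+1 != 0.
  move=> j; apply/negP => /eqP e; have := subrX1 q j.+1.
  rewrite /qint in e; rewrite e mulr0 => /eqP; rewrite subr_eq0; apply/negP; exact: hq.
have qf : forall j, qfact q j != 0 by move=> j; apply/prodf_neq0 => i _; exact: qi.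
by move=> m i; rewrite /qbinom mulf_neq0 // invr_neq0 // mulf_neq0.
Qed.


Section Surj.
Variables (q : k) (phi : Hsp k -> Hsp k).
Hypothesis hq : forall n : nat, (0 < n)%N -> q ^+ n != 1.
Hypothesis hphi : is_autcgr q phi.

Lemma phi_lin : islin phi. Proof. by case: hphi. Qed.
Lemma phi_bij : bijective phi. Proof. by case: hphi. Qed.
Lemma phi_coal v : Delta q (phi v) = tmap phi phi (Delta q v). Proof. by case: hphi. Qed.
Lemma phi_gr m v : inHm m v -> inHm m (phi v). Proof. by case: hphi => _ _ _ _; apply. Qed.

Definition g (n : int) (m : nat) (a : int) := (phi (bas k (n, m)))@_(a, m).

Lemma coef_gr n i a j : (phi (bas k (n, i)))@_(a, j) = if i == j then g n i a else 0.
Proof.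
case: eqP => [<-//|ne]; apply: mcoeff_outdom; apply/negP.
by move=> h; have /= := @phi_gr i _ (@inHm_bas n i) _ h => e; apply: ne.
Qed.

Lemma Eq (n : int) (m i0 : nat) (a b : int) : (i0 <= m)%N ->
  g n m a * (b == a + i0%:Z)%:R = g n i0 a * g (n + i0%:Z) (m - i0) b.
Proof.
move=> le; have := congr1 (mcoeff ((a, i0), (b, (m - i0)%N))) (phi_coal (bas k (n, m))).
rewrite DeltaC subnKC // tmap_Dbas mcoeff_sum.
have lt : (i0 < m.+1)%N by rewrite ltnS.
rewrite (bigD1 (Ordinal lt)) //= big1 ?addr0; last first.
  move=> i; rewrite -val_eqE /= => ne.
  by rewrite mcoeffZ tensC coef_gr (negbTE ne) mul0r mulr0.
rewrite mcoeffZ tensC coef_gr eqxx /g => e.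
apply: (mulfI (qbinom_neq0 hq m i0)); rewrite mulrCA; exact: e.
Qed.


Lemma bas_neq0 (p : K) : bas k p != 0.
Proof. by apply/eqP => /(congr1 (mcoeff p)); rewrite mcoeffU1' eqxx mcoeff0 => /eqP; rewrite oner_eq0. Qed.

Lemma phi0 : phi 0 = 0.
Proof. exact: islin0 phi_lin. Qed.

Lemma phib_neq0 n m : phi (bas k (n, m)) != 0.
Proof.
apply/eqP => e; have [psi c1 _] := phi_bij.
have h := c1 (bas k (n, m)); rewrite e -phi0 c1 in h.
by have := bas_neq0 (n, m); rewrite -h eqxx.
Qed.

Lemma ex_nz n m : exists a, g n m a != 0.
Proof.
case: (fset_0Vmem (msupp (phi (bas k (n, m))))) => [e|[[a j] h]].
  by have := phib_neq0 n m; rewrite (monalgE (phi _)) e big_seq_fset0 eqxx.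
exists a; rewrite /g.
have /= e := @phi_gr m _ (@inHm_bas n m) _ h; subst j.
by rewrite mcoeff_neq0.
Qed.

Definition s n := xchoose (ex_nz n 0).

Lemma gs_nz n : g n 0 (s n) != 0.
Proof. rewrite /s; exact: (xchooseP (ex_nz n 0)). Qed.

Lemma g00 n a b : g n 0 a * (b == a)%:R = g n 0 a * g n 0 b.
Proof. by have := Eq n a b (leqnn 0); rewrite !addr0 subnn => h; exact: h. Qed.

Lemma gs1 n : g n 0 (s n) = 1.
Proof.
have := g00 n (s n) (s n); rewrite eqxx mulr1 => e.
by apply: (mulfI (gs_nz n)); rewrite mulr1 -e.
Qed.

Lemma g0b n b : b != s n -> g n 0 b = 0.
Proof.
move=> ne; have := g00 n (s n) b; rewrite (negbTE ne) mulr0 gs1 mul1r.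
by move=> ->.
Qed.

Lemma gmb n m b : b != s n -> g n m b = 0.
Proof.
move=> ne; have := Eq n (s n) b (leq0n m); rewrite !addr0 subn0 (negbTE ne) mulr0 gs1 mul1r.
by move=> ->.
Qed.

Definition c n m := g n m (s n).

Lemma phiB n m : phi (bas k (n, m)) = c n m *: bas k (s n, m).
Proof.
apply/malgP => -[a j]; rewrite coef_gr mcoeffZ mcoeffU1' xpair_eqE.
case: (eqVneq m j) => [e|ne]; last by rewrite andbF mulr0.
subst j.
rewrite andbT /c; case: (eqVneq (s n) a) => [->|ne]; first by rewrite mulr1.
by rewrite mulr0 gmb // eq_sym.
Qed.

Lemma c_nz n m : c n m != 0.
Proof.
apply/eqP => e; have := phib_neq0 n m; by rewrite phiB e scale0r eqxx.
Qed.

Lemma s_add n (m : nat) : s (n + m%:Z) = s n + m%:Z.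
Proof.
have := Eq n (s n) (s n + m%:Z) (leqnn m); rewrite eqxx mulr1 subnn => e.
have h : g (n + m%:Z) 0 (s n + m%:Z) != 0.
  by apply/eqP => z; move: (c_nz n m); rewrite /c e z mulr0 eqxx.
by apply/eqP; apply: contraNT h => ne; rewrite g0b // eq_sym.
Qed.

Definition r0 := s 0.

Lemma sE n : s n = n + r0.
Proof.
case: n => m.
  by have := s_add 0 m; rewrite add0r addrC.
have := s_add (Negz m) m.+1.
rewrite NegzE addNr -/r0 => e.
by rewrite e addrC addrK.
Qed.

Definition alc (t : int) := c (t - r0) 1.

Lemma c_rec n m : c n m.+1 = c n 1 * c (n + 1) m.
Proof.
rewrite /c; have := Eq n (s n) (s n + 1) (ltn0Sn m); rewrite eqxx mulr1 subSS subn0 => ->.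
by rewrite sE (sE (n + 1)) addrAC.
Qed.

Lemma c_prod n m : c n m = \prod_(i < m) alc (n + r0 + (i : nat)%:Z).
Proof.
elim: m n => [|m IH] n.
  by rewrite big_ord0 /c gs1.
rewrite c_rec big_ord_recl IH /alc addr0 addrK; congr (_ * _).
apply: eq_bigr => i _; congr alc; rewrite /bump /=.
have -> : bump 0%N i = i.+1 by rewrite /bump add1n.
rewrite -addn1 PoszD; ring.
Qed.

Lemma surj : (forall n, alc n != 0) /\ (forall v, phi v = Psi alc r0 v).
Proof.
split; first by move=> n; apply: c_nz.
apply: basis_ext phi_lin (Psi_lin _ _) _ => -[n m].
change (phi (bas k (n, m)) = Psi alc r0 (bas k (n, m))).
by rewrite phiB PsiB sE c_prod.
Qed.

End Surj.

End Gen.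

Unset Implicit Arguments.

Theorem theorem2p13 (k : fieldType) (q : k) (hq0 : q != 0)
  (hq : forall n : nat, (0 < n)%N -> q ^+ n != 1) :
  (* Ψ lands in Aut_c^gr(H) *)
  [/\ (forall (al : int -> k) (r : int), (forall n, al n != 0) ->
         is_autcgr q (Psi al r)),
  (* Ψ is a group homomorphism *)
      (forall (al be : int -> k) (r t : int),
         (forall n, al n != 0) -> (forall n, be n != 0) ->
         forall v, Psi (sd_mul al r be t).1 (sd_mul al r be t).2 v
                   = Psi al r (Psi be t v)),
  (* Ψ is injective *)
      (forall (al be : int -> k) (r t : int),
         (forall n, al n != 0) -> (forall n, be n != 0) ->
         (forall v, Psi al r v = Psi be t v) ->
         (forall n, al n = be n) /\ r = t)
  (* Ψ is surjective onto Aut_c^gr(H) *)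
    & (forall phi : Hsp k -> Hsp k, is_autcgr q phi ->
         exists (al : int -> k) (r : int),
           (forall n, al n != 0) /\ (forall v, phi v = Psi al r v))].
Proof.
split.
- by move=> al r hal; apply: part1.
- by move=> al be r t _ _ v; apply: Psi_hom.
- by move=> al be r t hal _ h; apply: Psi_inj.
- move=> phi hphi; have [h1 h2] := surj hq hphi.
  by eexists; eexists; split; [exact: h1 | exact: h2].
Qed.
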